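(* Let $\mu$ be an integer with $h/2<\mu\le h$ and let $l$ be an integer with $2\le l\le n$. Then there exists $p\in\mathcal P$ such that $\Gamma_\mu(p)$ is $l$-cyclic if and only if $\mu\le \frac{l-1}{l}h$.
   Context: Let $n,h\ge2$, $N=\{1,\dots,n\}$, $H=\{1,\dots,h\}$, $\mathcal P$ the set of $h$-tuples of linear orders on $N$; $x>_{p_i}y$ means $x\neq y$ and $p_i$ ranks $x$ above $y$; $x>^p_\mu y$ means $|\{i: x>_{p_i}y\}|\ge\mu$. The $\mu$-majority graph is the directed graph $\Gamma_\mu(p)=(N,\{(x,y): x>^p_\mu y\})$. An $l$-cycle is a directed graph on $l$ distinct vertices $x_1,\dots,x_l$ with arc set exactly $\{(x_j,x_{j+1}):1\le j\le l\}$, $x_{l+1}=x_1$. A directed graph is $l$-cyclic if it has an $l$-cycle as a subgraph (vertex set and arc set contained in those of the graph). *)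

(* Defs.v *)
From mathcomp Require Import all_boot.
Set Implicit Arguments. Unset Strict Implicit. Unset Printing Implicit Defensive.

(* N = {1..n} is modelled by 'I_n, H = {1..h} by 'I_h. *)

(* A linear order on 'I_n: reflexive, antisymmetric, transitive, total relation
   (r x y means "x is ranked weakly above y"). *)
Definition linear_order (n : nat) (r : rel 'I_n) : Prop :=
  [/\ reflexive r, antisymmetric r, transitive r & total r].

Definition profile (n h : nat) (p : 'I_h -> rel 'I_n) : Prop :=
  forall i, linear_order (p i).

Definition strict_pref (n h : nat) (p : 'I_h -> rel 'I_n) (i : 'I_h) (x y : 'I_n) : bool :=
  (x != y) && p i x y.

Definition mu_beats (n h : nat) (p : 'I_h -> rel 'I_n) (mu : nat) (x y : 'I_n) : bool :=
  mu <= #|[set i : 'I_h | strict_pref p i x y]|.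

Definition majority_graph (n h : nat) (p : 'I_h -> rel 'I_n) (mu : nat) : rel 'I_n :=
  fun x y => mu_beats p mu x y.

Definition l_cyclic (n : nat) (G : rel 'I_n) (l : nat) : Prop :=
  exists x : 'I_l -> 'I_n, injective x /\ forall j : 'I_l, G (x j) (x (ordS j)).

(* Main.v *)
Require Import Defs.
From mathcomp Require Import all_boot zify.

Lemma no_full_cycle n l (x : 'I_l -> 'I_n) (r : rel 'I_n) :
  2 <= l -> injective x -> linear_order r -> ~ (forall j, r (x j) (x (ordS j))).
Proof.
case: l x => [|[|l']] // x _ xinj [Rr Ar Tr _] H.
have step : forall m, m < l'.+1 -> ordS (inord m : 'I_l'.+2) = inord m.+1.
  move=> m hm; apply: val_inj; rewrite /= !inordK ?modn_small //; lia.
have claim : forall m, 1 <= m <= l'.+1 -> r (x (inord 1)) (x (inord m)).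
  elim=> [|m IH] //= hm.
  case: m IH hm => [|m] IH hm; first exact: Rr.
  apply: (Tr _ _ _ (IH _)); first lia.
  rewrite -(step m.+1); [exact: H| lia].
have h1 := claim l'.+1 (leqnn _).
have e0 : ordS (inord l'.+1 : 'I_l'.+2) = ord0.
  apply: val_inj; rewrite /= inordK // modnn //.
have h2 := H (inord l'.+1); rewrite e0 in h2.
have e1 : ordS (ord0 : 'I_l'.+2) = inord 1.
  apply: val_inj; rewrite /= inordK // modn_small //.
have h3 := H ord0; rewrite e1 in h3.
have := Ar _ _ (introT andP (conj h3 (Tr _ _ _ h1 h2))).
move/xinj => /(congr1 val) /=; rewrite inordK //.
Qed.

Lemma card_sumE (T : finType) (A : {set T}) : #|A| = \sum_(i : T) (i \in A).
Proof. rewrite -sum1_card big_mkcond; apply: eq_bigr => i _; by case: (i \in A). Qed.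

Lemma necessity n h mu l (p : 'I_h -> rel 'I_n) : 2 <= l -> profile p ->
  l_cyclic (majority_graph p mu) l -> mu * l <= (l - 1) * h.
Proof.
move=> hl hp [x [xinj Hx]].
pose S j := [set i | strict_pref p i (x j) (x (ordS j))].
have -> : mu * l = \sum_(j < l) mu by rewrite sum_nat_const card_ord mulnC.
apply: (@leq_trans (\sum_(j<l) #|S j|)); first by apply: leq_sum => j _; exact: Hx j.
rewrite /S.
under eq_bigr => j _ do rewrite card_sumE.
rewrite exchange_big /=.
have -> : (l - 1) * h = \sum_(i < h) (l - 1) by rewrite sum_nat_const card_ord mulnC.
apply: leq_sum => i _.
have [j0 Hj0] : exists j0, ~~ strict_pref p i (x j0) (x (ordS j0)).
  apply/existsP; apply: contraT; rewrite negb_exists => /forallP Hall.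
  case: (no_full_cycle _ _ _ _ hl xinj (hp i)) => j.
  by have /negPn/andP[] := Hall j.
have -> : \sum_(j < l) (i \in [set i0 | strict_pref p i0 (x j) (x (ordS j))])
   = #|[set j | strict_pref p i (x j) (x (ordS j))]|.
  rewrite card_sumE; apply: eq_bigr => j _; by rewrite !inE.
have : [set j | strict_pref p i (x j) (x (ordS j))] \subset [set~ j0].
  apply/subsetP => j; rewrite !inE; apply: contraTneq => ->; exact: Hj0.
move/subset_leq_card; rewrite cardsC1 card_ord; lia.
Qed.

Definition rk (l k v : nat) : nat :=
  if v < l then (if k <= v then v - k else v + l - k) else v.

Lemma rk_inj l k a b : k < l -> rk l k a = rk l k b -> a = b.
Proof.
rewrite /rk => kl; case: (ltnP a l); case: (ltnP b l);
case: (leqP k a); case: (leqP k b); lia.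
Qed.

Lemma rk_arc l k j s : k < l -> j < l ->
  ((j.+1 < l /\ s = j.+1) \/ (j.+1 = l /\ s = 0)) -> k != s ->
  rk l k j <= rk l k s.
Proof.
rewrite /rk => kl jl hs /eqP ks.
have sl : s < l by lia.
rewrite jl sl; case: (leqP k j); case: (leqP k s); lia.
Qed.

Lemma sufficiency n h mu l : 2 <= h -> mu <= h -> 2 <= l -> l <= n ->
  mu * l <= (l - 1) * h ->
  exists p : 'I_h -> rel 'I_n, profile p /\ l_cyclic (majority_graph p mu) l.
Proof.
move=> h2 muh l2 ln H.
have hld : h <= l * (h - mu) by nia.
have [d' Hd'] : exists d', h - mu = d'.+1.
  exists (h - mu).-1; have : mu < h; last lia.
  rewrite ltn_neqAle muh andbT; apply/eqP => E; subst mu; nia.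
have l0 : 0 < l by lia.
pose p := fun (i : 'I_h) (a b : 'I_n) => rk l (i %% l) a <= rk l (i %% l) b.
exists p; split.
  move=> i; split.
  - by move=> a; rewrite /p.
  - move=> a b /andP[h1 h2']; apply: val_inj; apply: (@rk_inj l (i %% l)).
      by rewrite ltn_pmod.
    by apply/eqP; rewrite eqn_leq; apply/andP; split.
  - by move=> a b c; rewrite /p => h1 h3; apply: leq_trans h3.
  - by move=> a b; rewrite /p leq_total.
exists (widen_ord ln); split.
  by move=> a b /(congr1 val) /= E; apply: val_inj.
move=> j; rewrite /majority_graph /mu_beats.
have hs : ((j.+1 < l /\ (ordS j : nat) = j.+1) \/ (j.+1 = l /\ (ordS j : nat) = 0)).
  rewrite /=; case: (ltnP j.+1 l) => hj.
    by left; rewrite modn_small.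
  have E : j.+1 = l by have := ltn_ord j; lia.
  by right; rewrite E modnn.
pose A := [set i : 'I_h | i %% l == ordS j].
have cA : #|A| <= d'.+1.
  pose f := fun i : 'I_h => (inord (i %/ l) : 'I_d'.+1).
  have lt : forall i : 'I_h, i %/ l < d'.+1.
    by move=> i; rewrite ltn_divLR //; have := ltn_ord i; lia.
  rewrite -[d'.+1]card_ord; apply: (@leq_card_in _ _ f) => a b.
  rewrite !inE => /eqP ha /eqP hb /(congr1 val); rewrite /f /= !inordK // => E.
  by apply: val_inj; rewrite /= (divn_eq a l) (divn_eq b l) E ha hb.
have sub : ~: A \subset [set i | strict_pref p i (widen_ord ln j) (widen_ord ln (ordS j))].
  apply/subsetP => i; rewrite !inE => Hi; apply/andP; split.
    have Hv : (ordS j : nat) != j by case: hs => [[? ->]|[? ->]]; lia.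
    apply/eqP => /(congr1 val) /= E; by rewrite E eqxx in Hv.
  apply: (@rk_arc l (i %% l) j (ordS j)) => //; by rewrite ltn_pmod.
apply: leq_trans (subset_leq_card sub); have := cardsC A; rewrite card_ord; lia.
Qed.

Theorem proposition7 (n h mu l : nat) :
  2 <= n -> 2 <= h ->
  h < 2 * mu -> mu <= h ->
  2 <= l -> l <= n ->
  ((exists p : 'I_h -> rel 'I_n, profile p /\ l_cyclic (majority_graph p mu) l)
   <-> mu * l <= (l - 1) * h).
Proof.
move=> n2 h2 hmu muh l2 ln; split.
  by case=> p [hp hc]; exact: (necessity _ _ _ _ _ l2 hp hc).
by move=> H; exact: (sufficiency _ _ _ _ h2 muh l2 ln H).
Qed.
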